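(* Let $\epsilon>0$ and let $H$ be a $3$-graph on $n$ vertices. Then there exists a sub-$3$-graph $H_\epsilon$ of $H$ (with $V(H_\epsilon)\subseteq V(H)$ and $E(H_\epsilon)\subseteq E(H)$) such that (i) $|V(H)\setminus V(H_\epsilon)|\le 3\epsilon n$; (ii) $\deg_{H_\epsilon}(v)\ge \deg_H(v)-7\epsilon\binom n2$ for every $v\in V(H_\epsilon)$; (iii) $\deg_H(S)>\epsilon^2 n$ for every pair $S\in\partial H_\epsilon$.
   Context: For a $3$-graph $H$ and a set $S$ of one or two vertices, $\deg_H(S)$ is the number of edges of $H$ containing $S$ (for a vertex $v$, $\deg_H(v)=\deg_H(\{v\})$). The shadow $\partial G$ of a $3$-graph $G$ is the set of pairs of vertices contained in at least one edge of $G$. *)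

(* Defs.v *)
From mathcomp Require Import all_boot all_order all_algebra.
Set Implicit Arguments. Unset Strict Implicit. Unset Printing Implicit Defensive.

Definition is_3graph (T : finType) (H : {set {set T}}) : Prop :=
  forall e, e \in H -> #|e| = 3.

Definition deg (T : finType) (H : {set {set T}}) (S : {set T}) : nat :=
  #|[set e in H | S \subset e]|.

Definition shadow (T : finType) (H : {set {set T}}) : {set {set T}} :=
  [set S : {set T} | (#|S| == 2) && [exists e in H, S \subset e]].

(* Main.v *)
Require Import Defs.
From mathcomp Require Import all_boot all_order all_algebra.
From mathcomp Require Import ring lra.
Import Order.TTheory GRing.Theory Num.Theory.

Lemma card_sum (I : finType) (A : {pred I}) (P : pred I) :
  #|[set x in A | P x]| = \sum_(x in A) (P x : nat).
Proof.
rewrite -sum1_card (eq_bigl (fun x => (x \in A) && P x)); last by move=> x; rewrite inE.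
by rewrite big_mkcondr; apply: eq_bigr => x _; case: (P x).
Qed.

Lemma union_bound (I J : finType) (A : {set J}) (P : pred I) (Q : I -> J -> bool) :
  #|[set e in A | [exists u, P u && Q u e]]| <= \sum_(u | P u) #|[set e in A | Q u e]|.
Proof.
rewrite card_sum.
under [X in _ <= X]eq_bigr do rewrite card_sum.
rewrite exchange_big /=.
apply: leq_sum => e _.
case: existsP => [[u /andP[Pu Qu]]|] //.
by rewrite (bigD1 u) //= Qu.
Qed.

Lemma double_count (T : finType) (B : {set {set T}}) :
  \sum_v #|[set e in B | v \in e]| = \sum_(e in B) #|e|.
Proof.
under eq_bigr do rewrite card_sum.
rewrite exchange_big /=; apply: eq_bigr => e _.
have -> : #|e| = #|[set x in predT | x \in e]|.
  by apply: eq_card => x; rewrite !inE.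
by rewrite card_sum.
Qed.

Lemma pair_deg (T : finType) (H : {set {set T}}) (u v : T) :
  is_3graph H -> u != v ->
  #|[set e in H | (v \in e) && (u \in e)]| <= #|T|.-1.
Proof.
move=> H3 uv.
rewrite -(cardsC1 u).
pose f := fun w => u |: (v |: [set w]).
apply: (leq_trans _ (leq_imset_card f _)).
apply: subset_leq_card; apply/subsetP => e; rewrite !inE => /andP[eH /andP[ve ue]].
have sub : [set u; v] \subset e by rewrite subUset !sub1set ue ve.
have c2 : #|[set u; v]| = 2 by rewrite cards2 uv.
have : #|e :\: [set u; v]| == 1 by rewrite cardsDS // H3 // c2.
case/cards1P => w ew.
apply/imsetP; exists w.
  have : w \in e :\: [set u; v] by rewrite ew set11.
  by rewrite !inE; case/andP => /norP[].
by rewrite -{1}(setID e [set u; v]) (setIidPr sub) ew /f setUA.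
Qed.

Local Open Scope ring_scope.

Theorem lemma3p3 (R : realFieldType) (T : finType) (eps : R) (H : {set {set T}}) :
  0 < eps -> is_3graph H ->
  exists (W : {set T}) (F : {set {set T}}),
    [/\ F \subset H,
        (forall e, e \in F -> e \subset W),
        (#|~: W|%:R <= 3 * eps * #|T|%:R),
        (forall v, v \in W ->
           (deg H [set v])%:R - 7 * eps * ('C(#|T|, 2))%:R <= (deg F [set v])%:R)
      & (forall S, S \in shadow F -> eps ^+ 2 * #|T|%:R < (deg H S)%:R)].
Proof.
move=> eps0 H3.
set n := #|T|; set c := 'C(n, 2).
pose lowb (S : {set T}) := (#|S| == 2)%N && ~~ (eps ^+ 2 * n%:R < (deg H S)%:R).
pose isbad (e : {set T}) := [exists S, lowb S && (S \subset e)].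
pose badset := [set e in H | isbad e].
pose b v := #|[set e in badset | v \in e]|.
pose W := [set v | (b v)%:R <= eps * c%:R].
pose F := [set e in H | ~~ isbad e && (e \subset W)].
have sumb : (\sum_v b v = 3 * #|badset|)%N.
  rewrite /b double_count (eq_bigr (fun _ => 3%N)); last first.
    by move=> e; rewrite inE => /andP[eH _]; exact: H3.
  by rewrite sum_nat_const mulnC.
have badle : (#|badset| <= \sum_(S | lowb S) deg H S)%N.
  apply: leq_trans (@union_bound _ _ H lowb (fun S e => S \subset e)).
  by apply/eq_leq/eq_card => e; rewrite !inE.
have lowc : (#|lowb| <= c)%N.
  rewrite /c -card_draws; apply: subset_leq_card; apply/subsetP => S.
  by rewrite !inE => /andP[].
have badR : (#|badset|%:R <= c%:R * (eps^+2 * n%:R)).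
  apply: (le_trans (y := (\sum_(S | lowb S) deg H S)%:R)); first by rewrite ler_nat.
  rewrite natr_sum; apply: (le_trans (y := \sum_(S | lowb S) (eps^+2 * n%:R))).
    by apply: ler_sum => S /andP[_]; rewrite leNgt.
  rewrite sumr_const -(mulr_natl (eps^+2 * n%:R)); apply: ler_wpM2r.
    by apply: mulr_ge0; [apply: sqr_ge0 | apply: ler0n].
  by rewrite ler_nat.
have W3 : #|~: W|%:R <= 3 * eps * n%:R.
  case: (set_0Vmem (~: W)) => [-> | [v0 v0W]].
    by rewrite cards0 mulr_ge0 // mulr_ge0 // ltW.
  have strict : (eps * c%:R) *+ #|~: W| < \sum_(v in ~: W) (b v)%:R.
    rewrite -sumr_const; apply: ltr_sum.
      by apply/hasP; exists v0 => //; rewrite mem_index_enum.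
    by move=> v; rewrite !inE -ltNge.
  have s2 : \sum_(v in ~: W) (b v)%:R <= (3 * #|badset|)%:R :> R.
    rewrite -sumb -natr_sum ler_nat.
    by rewrite [X in (_ <= X)%N](bigID (fun v => v \in ~: W)) /= leq_addr.
  have lt := lt_le_trans strict s2.
  rewrite natrM in lt.
  have lt2 := lt_le_trans lt (ler_wpM2l (ler0n _ 3) badR).
  have cpos : 0 < c%:R :> R.
    rewrite ltr0n lt0n; apply/negP => /eqP c0; move: lt2.
    by rewrite c0 !(mulr0, mul0r, mul0rn, mulr0n) ltxx.
  rewrite -mulr_natl in lt2.
  have e3 : 3%:R * (c%:R * (eps ^+ 2 * n%:R)) = (3 * eps * n%:R) * (eps * c%:R) :> R by ring.
  rewrite e3 ltr_pM2r in lt2; first exact: ltW.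
  exact: mulr_gt0.
exists W, F; split.
- by apply/subsetP => e; rewrite inE => /andP[].
- by move=> e; rewrite inE => /and3P[].
- exact: W3.
- move=> v vW.
  have vWb : (b v)%:R <= eps * c%:R by move: vW; rewrite inE.
  pose X := [set e in H | [exists u, (u \notin W) && ((v \in e) && (u \in e))]].
  have dec : (deg H [set v] <= b v + #|X| + deg F [set v])%N.
    rewrite /deg.
    apply: (leq_trans (n := #|([set e in badset | v \in e] :|: X) :|: [set e in F | [set v] \subset e]|)).
      apply: subset_leq_card; apply/subsetP => e; rewrite !inE sub1set => /andP[eH ve].
      have [Hb|Hb] := boolP (isbad e).
        by apply/orP; left; apply/orP; left; rewrite eH ve andbT.
      have [sW|sW] := boolP (e \subset W).
        by apply/orP; right; apply/andP; split => //; apply/and3P; split.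
      move/subsetPn: sW => [u ue uW].
      apply/orP; left; apply/orP; right; apply/andP; split => //.
      by apply/existsP; exists u; apply/and3P.
    apply: leq_trans (leq_card_setU _ _).1 _; rewrite leq_add2r; exact: (leq_card_setU _ _).1.
  have Xle : (#|X| <= #|~: W| * n.-1)%N.
    apply: leq_trans (@union_bound _ _ H (fun u => u \notin W) (fun u e => (v \in e) && (u \in e))) _.
    apply: (leq_trans (n := \sum_(u | u \notin W) n.-1)).
      apply: leq_sum => u uW; apply: pair_deg => //.
      by apply/eqP => uv; move: uW; rewrite uv vW.
    by rewrite -sum_nat_const; apply: eq_leq; apply: eq_bigl => u; rewrite in_setC.
  have nn : (n * n.-1 = 2 * c)%N by rewrite /c -mul_bin_diag bin1.
  have := dec; rewrite -(ler_nat R) !natrD => dR.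
  have XR : #|X|%:R <= 6%:R * (eps * c%:R) :> R.
    apply: (le_trans (y := (#|~: W| * n.-1)%:R)); first by rewrite ler_nat.
    rewrite natrM; apply: le_trans (ler_wpM2r (ler0n _ _) W3) _.
    have -> : 3 * eps * n%:R * n.-1%:R = 6%:R * (eps * c%:R) :> R.
      by rewrite -mulrA -natrM nn natrM; ring.
    by [].
  have -> : 7 * eps * c%:R = 7 * (eps * c%:R) :> R by ring.
  move: vWb XR dR; set x := eps * c%:R; lra.
- move=> S; rewrite inE => /andP[S2 /existsP[e /andP[eF Se]]].
  move: eF; rewrite inE => /and3P[_ nb _].
  case: (ltrP (eps ^+ 2 * n%:R) (deg H S)%:R) => // Hle.
  exfalso; move/negP: nb; apply; apply/existsP; exists S.
  by rewrite /lowb S2 Se -leNgt Hle.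
Qed.
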